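(* Let $\phi$ be a continuous flow on a compact metric space $(X,d)$. Then $\phi$ is expansive if and only if every point of $X$ is uniformly-expansive.
   Context: A continuous flow is a continuous map $\phi:\mathbb{R}\times X\to X$, $\phi^t(x)=\phi(t,x)$, with $\phi^0=\mathrm{id}$, $\phi^{t+s}=\phi^s\circ\phi^t$; $O(x)=\{\phi^t(x):t\in\mathbb{R}\}$. A reparametrization is an increasing homeomorphism $h:\mathbb{R}\to\mathbb{R}$ with $h(0)=0$. $\phi$ is expansive if for every $\varepsilon>0$ there is $\delta>0$ such that whenever $x,y\in X$ and some reparametrization $h$ satisfy $d(\phi^t(x),\phi^{h(t)}(y))<\delta$ for all $t\in\mathbb{R}$, then $y=\phi^s(z)$ with $z\in O(x)$ and $|s|<\varepsilon$. A point $x$ is uniformly-expansive if there is a neighborhood $U$ of $x$ such that for every $\varepsilon>0$ there is $\delta>0$ such that whenever $y,z\in U$ and some reparametrization $h$ satisfies $d(\phi^t(y),\phi^{h(t)}(z))<\delta$ for all $t\in\mathbb{R}$, then $y=\phi^s(w)$ with $w\in O(z)$ and $|s|<\varepsilon$. *)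

(* Defs.v *)
From Stdlib Require Import Reals List.
Open Scope R_scope.

Definition is_metric {X : Type} (d : X -> X -> R) : Prop :=
  (forall x y, 0 <= d x y) /\
  (forall x y, d x y = 0 <-> x = y) /\
  (forall x y, d x y = d y x) /\
  (forall x y z, d x z <= d x y + d y z).

Definition metric_open {X : Type} (d : X -> X -> R) (U : X -> Prop) : Prop :=
  forall x, U x -> exists r, 0 < r /\ forall y, d x y < r -> U y.

Definition metric_compact {X : Type} (d : X -> X -> R) : Prop :=
  forall (I : Type) (U : I -> X -> Prop),
    (forall i, metric_open d (U i)) ->
    (forall x, exists i, U i x) ->
    exists l : list I, forall x, exists i, In i l /\ U i x.

Definition jointly_continuous {X : Type} (d : X -> X -> R) (phi : R -> X -> X) : Prop :=
  forall t x eps, 0 < eps -> exists delta, 0 < delta /\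
    forall s y, Rabs (s - t) < delta -> d x y < delta -> d (phi t x) (phi s y) < eps.

Definition continuous_flow {X : Type} (d : X -> X -> R) (phi : R -> X -> X) : Prop :=
  jointly_continuous d phi /\
  (forall x, phi 0 x = x) /\
  (forall t s x, phi (t + s) x = phi s (phi t x)).

Definition orbit {X : Type} (phi : R -> X -> X) (x : X) (z : X) : Prop :=
  exists t, z = phi t x.

Definition reparametrization (h : R -> R) : Prop :=
  (forall s t, s < t -> h s < h t) /\
  continuity h /\
  (forall u, exists t, h t = u) /\
  h 0 = 0.

Definition expansive {X : Type} (d : X -> X -> R) (phi : R -> X -> X) : Prop :=
  forall eps, 0 < eps -> exists delta, 0 < delta /\
    forall x y h, reparametrization h ->
      (forall t, d (phi t x) (phi (h t) y) < delta) ->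
      exists s z, orbit phi x z /\ y = phi s z /\ Rabs s < eps.

Definition uniformly_expansive_point {X : Type} (d : X -> X -> R)
    (phi : R -> X -> X) (x : X) : Prop :=
  exists U : X -> Prop, (exists r, 0 < r /\ forall y, d x y < r -> U y) /\
    forall eps, 0 < eps -> exists delta, 0 < delta /\
      forall y z h, U y -> U z -> reparametrization h ->
        (forall t, d (phi t y) (phi (h t) z) < delta) ->
        exists s w, orbit phi z w /\ y = phi s w /\ Rabs s < eps.

(* Main.v *)
Require Import Defs.
From Stdlib Require Import Reals Lra List Classical.
Open Scope R_scope.

Definition inorb {X : Type} (phi : R -> X -> X) (a b : X) : Prop := exists t, a = phi t b.

Lemma inorb_sym {X : Type} (phi : R -> X -> X) :
  (forall x, phi 0 x = x) -> (forall t s x, phi (t + s) x = phi s (phi t x)) ->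
  forall a b, inorb phi a b -> inorb phi b a.
Proof.
  intros H0 Ha a b [t ->]. exists (-t). rewrite <- Ha.
  replace (t + - t) with 0 by ring. now rewrite H0.
Qed.

Lemma inorb_of_concl {X : Type} (phi : R -> X -> X) :
  (forall t s x, phi (t + s) x = phi s (phi t x)) ->
  forall y z, (exists s w, orbit phi z w /\ y = phi s w /\ True) -> inorb phi y z.
Proof.
  intros Ha y z [s [w [[t Ht] [Hy _]]]]. subst. exists (t + s). now rewrite Ha.
Qed.

Lemma concl_of_inorb {X : Type} (phi : R -> X -> X) (eps : R) :
  (forall x, phi 0 x = x) -> 0 < eps ->
  forall y z, inorb phi y z -> exists s w, orbit phi z w /\ y = phi s w /\ Rabs s < eps.
Proof.
  intros H0 He y z Hyz. exists 0, y. split; [exact Hyz|]. split.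
  - now rewrite H0.
  - rewrite Rabs_R0. lra.
Qed.

Section S.
Context {X : Type} (d : X -> X -> R) (phi : R -> X -> X).

Definition UEprop (x : X) (r : R) : Prop :=
  0 < r /\ exists U : X -> Prop, (forall y, d x y < r -> U y) /\
    forall eps, 0 < eps -> exists delta, 0 < delta /\
      forall y z h, U y -> U z -> reparametrization h ->
        (forall t, d (phi t y) (phi (h t) z) < delta) ->
        exists s w, orbit phi z w /\ y = phi s w /\ Rabs s < eps.

Lemma list_delta (l : list (X * R)) :
  exists delta, 0 < delta /\ forall i, In i l -> UEprop (fst i) (snd i) ->
    delta <= snd i / 2 /\
    forall y z h, d (fst i) y < snd i -> d (fst i) z < snd i -> reparametrization h ->
        (forall t, d (phi t y) (phi (h t) z) < delta) ->
        exists s w, orbit phi z w /\ y = phi s w /\ Rabs s < 1.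
Proof.
  induction l as [|a l IH].
  - exists 1. split; [lra|]. intros i [].
  - destruct IH as [dl [Hdl IH]].
    destruct (classic (UEprop (fst a) (snd a))) as [Ha|Ha].
    + destruct Ha as [Hr [U [HU Hp]]].
      destruct (Hp 1 Rlt_0_1) as [da [Hda Ha]].
      exists (Rmin dl (Rmin da (snd a / 2))). split.
      { apply Rmin_pos; [lra|apply Rmin_pos; lra]. }
      intros i [<-|Hi] HP.
      * split; [ eapply Rle_trans; [apply Rmin_r|apply Rmin_r] |].
        intros y z h Hy Hz Hh Ht. apply (Ha y z h (HU y Hy) (HU z Hz) Hh).
        intros t. eapply Rlt_le_trans; [apply Ht|].
        eapply Rle_trans; [apply Rmin_r|apply Rmin_l].
      * destruct (IH i Hi HP) as [Hle Hi']. split.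
        { eapply Rle_trans; [apply Rmin_l|exact Hle]. }
        intros y z h Hy Hz Hh Ht. apply (Hi' y z h Hy Hz Hh).
        intros t. eapply Rlt_le_trans; [apply Ht|apply Rmin_l].
    + exists dl. split; [exact Hdl|]. intros i [<-|Hi] HP.
      * contradiction.
      * now apply IH.
Qed.
End S.

Theorem mainTheorem5 (X : Type) (d : X -> X -> R) (phi : R -> X -> X) :
  is_metric d -> metric_compact d -> continuous_flow d phi ->
  (expansive d phi <-> forall x : X, uniformly_expansive_point d phi x).
Proof.
  intros [Hpos [Hzero [Hsym Htri]]] Hcomp [_ [H0 Hadd]]. split.
  - intros Hexp x. exists (fun _ => True). split.
    { exists 1. split; [lra|auto]. }
    intros eps He. destruct (Hexp eps He) as [delta [Hd Hx]].
    exists delta. split; [exact Hd|].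
    intros y z h _ _ Hh Ht.
    destruct (Hx y z h Hh Ht) as [s [w [Hw [Hz _]]]].
    apply concl_of_inorb; auto.
    apply (inorb_sym phi H0 Hadd).
    apply (inorb_of_concl phi Hadd). exists s, w. auto.
  - intros HUE.
    destruct (Hcomp (X * R)%type
      (fun i y => UEprop d phi (fst i) (snd i) /\ d (fst i) y < snd i / 2)) as [l Hl].
    + intros [x r] y [HP Hy]. simpl in *.
      exists (r / 2 - d x y). split; [lra|].
      intros y' Hy'. split; [exact HP|].
      pose proof (Htri x y y'). lra.
    + intros x. destruct (HUE x) as [U [[r [Hr HU]] Hp]].
      exists (x, r). simpl. split.
      * split; [exact Hr|]. exists U. split; assumption.
      * assert (d x x = 0) by (apply Hzero; reflexivity). lra.
    + intros eps He. destruct (list_delta d phi l) as [delta [Hd Hl']].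
      exists delta. split; [exact Hd|].
      intros x y h Hh Ht.
      destruct (Hl x) as [i [Hi [HP Hx]]].
      destruct (Hl' i Hi HP) as [Hle Hi'].
      assert (Hxy : d x y < delta).
      { specialize (Ht 0). destruct Hh as [_ [_ [_ Hh0]]].
        rewrite Hh0, !H0 in Ht. exact Ht. }
      assert (Hiy : d (fst i) y < snd i).
      { pose proof (Htri (fst i) x y). lra. }
      assert (Hix : d (fst i) x < snd i).
      { pose proof (Hpos (fst i) y). lra. }
      destruct (Hi' x y h Hix Hiy Hh Ht) as [s [w [Hw [Hxw _]]]].
      apply concl_of_inorb; auto.
      apply (inorb_sym phi H0 Hadd).
      apply (inorb_of_concl phi Hadd). exists s, w. auto.
Qed.
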